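(* In the connectivity graph model, let $P$ be a path shape between $u$ and $v$ with $k$ turning points $(tp_1,tp_2,\dots,tp_k)$ ordered from $u$ to $v$, and let $\sigma$ be any growth process that grows $P$ from a single node which is the turning point $tp_i$. Then $\sigma$ generates the turning points $tp_{i+1},\dots,tp_k$ in the order $(tp_{i+1},tp_{i+2},\dots,tp_k)$ and the turning points $tp_1,\dots,tp_{i-1}$ in the order $(tp_{i-1},tp_{i-2},\dots,tp_1)$. Moreover, $\sigma$ respects the direction of $P$ at every node: whenever a node that already has a neighbor generates a new node, the direction of the new node from it is the one prescribed by $P$ (so that the final path has at that node the same turn or straight continuation as $P$).
   Context: Shapes. Grid points are integer pairs $(x,y)$; two grid points are adjacent if they are at orthogonal (Manhattan) distance $1$. A shape $S=(V,E)$ is a finite connected graph whose nodes occupy distinct grid points and whose edges join only pairs of nodes occupying adjacent points; shapes are considered up to translation. Growth operations. One node, the anchor $u_0$, is stationary; other nodes move relative to it, and a tree is rooted at $u_0$. A growth operation on a node $u$ toward an adjacent grid point $p$ either (i) if $u$ has no edge to $p$, creates a new node $u'$ at $p$ with edge $uu'$; or (ii) if $p$ is occupied by a node $v$ with $uv\in E$, creates a new node $u'$ at $p$, replaces edge $uv$ by edges $uu',u'v$, and translates by one unit, along the axis of $uv$, the part of the tree hanging from whichever of $u,v$ is farther from $u_0$, away from the other endpoint. In one time step a set of operations is applied concurrently, each node receiving at most one operation and all operations having the same cardinal direction; the displacement of each node is the sum of the unit vectors contributed by the operations on its path to $u_0$. The set is collision-free if no two nodes collide during these motions or end at the same point. Growth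 processes (connectivity graph model). A growth process from an initial shape $S_0$ performs time steps $t=1,2,\dots$, each applying a collision-free set of growth operations to the current shape; no edges are deleted and no edges are created other than by the operations. It grows $S$ from $S_0$ in $t_f$ time steps if the shape obtained after step $t_f$ is $S$. For a path $P=(w_1,\dots,w_n)$, $w_i$ is a turning point if $i\in\{1,n\}$ or $w_{i-1}w_i\perp w_iw_{i+1}$. *)

(* Defs.v *)
From Stdlib Require Import ZArith List Reals Arith.
Import ListNotations.

Definition point := (Z * Z)%type.
Definition padd (p q : point) : point := (fst p + fst q, snd p + snd q)%Z.
Definition psub (p q : point) : point := (fst p - fst q, snd p - snd q)%Z.

Definition adjacent (p q : point) : Prop :=
  (Z.abs (fst p - fst q) + Z.abs (snd p - snd q) = 1)%Z.

Definition cardinal (d : point) : Prop :=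
  d = (1, 0)%Z \/ d = (-1, 0)%Z \/ d = (0, 1)%Z \/ d = (0, -1)%Z.

Record config := mkConfig {
  node : nat -> Prop;
  loc  : nat -> point;
  edge : nat -> nat -> Prop
}.

Definition single_node (S : config) (u0 : nat) : Prop :=
  (forall z, node S z <-> z = u0) /\ (forall a b, ~ edge S a b).

(* An operation is a pair (u, u'): the operation on node u creates the new
   node u'.  All operations of a time step share the cardinal direction d;
   the operation on u is toward p = loc u + d.
   [subdiv S d u v]: p is occupied by a neighbour v of u (case (ii)). *)
Definition subdiv (S : config) (d : point) (u v : nat) : Prop :=
  edge S u v /\ loc S v = padd (loc S u) d.

Definition kept_edge (S : config) (d : point) (ops : list (nat * nat))
  (a b : nat) : Prop :=
  edge S a b /\
  ~ (exists a', In (a, a') ops /\ subdiv S d a b) /\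
  ~ (exists b', In (b, b') ops /\ subdiv S d b a).

Definition start_pos (S : config) (ops : list (nat * nat)) (z : nat)
  (p : point) : Prop :=
  (node S z /\ p = loc S z) \/ (exists u, In (u, z) ops /\ p = loc S u).

Definition traj (p q : point) (t : R) : R * R :=
  (IZR (fst p) + t * (IZR (fst q) - IZR (fst p)),
   IZR (snd p) + t * (IZR (snd q) - IZR (snd p)))%R.

(* Displacements are specified
   edge-wise: every untouched edge keeps its vector, every new edge gets
   vector d, and the anchor is stationary; on the (tree) shape this is the
   same as "the displacement of a node is the sum of the unit vectors
   contributed by the operations on its path to u0". *)
Definition step (u0 : nat) (S S' : config) (d : point)
  (ops : list (nat * nat)) : Prop :=
  cardinal d /\
  NoDup (map fst ops) /\
  NoDup (map snd ops) /\
  (forall u u', In (u, u') ops -> node S u /\ ~ node S u') /\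
  (forall z, node S' z <-> node S z \/ exists u, In (u, z) ops) /\
  (forall a b, edge S' a b <->
     kept_edge S d ops a b \/
     (exists u u', In (u, u') ops /\
        ((a = u /\ b = u') \/ (a = u' /\ b = u))) \/
     (exists u u' v, In (u, u') ops /\ subdiv S d u v /\
        ((a = u' /\ b = v) \/ (a = v /\ b = u')))) /\
  loc S' u0 = loc S u0 /\
  (forall a b, kept_edge S d ops a b ->
     psub (loc S' b) (loc S' a) = psub (loc S b) (loc S a)) /\
  (forall u u', In (u, u') ops -> loc S' u' = padd (loc S' u) d) /\
  (forall u u' v, In (u, u') ops -> subdiv S d u v ->
     loc S' v = padd (loc S' u') d) /\
  (forall a b pa pb, a <> b -> node S' a -> node S' b ->
     start_pos S ops a pa -> start_pos S ops b pb ->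
     forall t : R, (0 < t <= 1)%R ->
       traj pa (loc S' a) t <> traj pb (loc S' b) t).

Definition growth_process (u0 T : nat) (S : nat -> config)
  (D : nat -> point) (O : nat -> list (nat * nat)) : Prop :=
  single_node (S 0) u0 /\
  forall s, s < T -> step u0 (S s) (S (Datatypes.S s)) (D s) (O s).

Definition first_time (S : nat -> config) (z s : nat) : Prop :=
  node (S s) z /\ forall s', s' < s -> ~ node (S s') z.

Definition pt (P : list point) (j : nat) : point := nth j P (0, 0)%Z.

Definition path_shape (P : list point) : Prop :=
  1 <= length P /\ NoDup P /\
  forall j, j + 1 < length P -> adjacent (pt P j) (pt P (j + 1)).

Definition realizes (S : config) (P : list point) (c : point) : Prop :=
  (forall z, node S z -> exists j, j < length P /\ loc S z = padd (pt P j) c) /\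
  (forall j, j < length P -> exists z, node S z /\ loc S z = padd (pt P j) c) /\
  (forall z z', node S z -> node S z' -> loc S z = loc S z' -> z = z') /\
  (forall z z', node S z -> node S z' ->
     (edge S z z' <-> exists j, j + 1 < length P /\
        ((loc S z = padd (pt P j) c /\ loc S z' = padd (pt P (j + 1)) c) \/
         (loc S z' = padd (pt P j) c /\ loc S z = padd (pt P (j + 1)) c)))).

Definition dotZ (p q : point) : Z := (fst p * fst q + snd p * snd q)%Z.

Definition turningb (P : list point) (j : nat) : bool :=
  Nat.eqb j 0 || Nat.eqb j (length P - 1) ||
  Z.eqb (dotZ (psub (pt P j) (pt P (j - 1))) (psub (pt P (j + 1)) (pt P j))) 0.

Definition turning_points (P : list point) : list nat :=
  filter (turningb P) (seq 0 (length P)).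

(* tp_m (0-based) as an index into P *)
Definition tp (P : list point) (m : nat) : nat := nth m (turning_points P) 0.

Definition nbr_dir (P : list point) (j : nat) (e : point) : Prop :=
  (0 < j /\ pt P (j - 1) = padd (pt P j) e) \/
  (j + 1 < length P /\ pt P (j + 1) = padd (pt P j) e).

(* Main.v *)
Require Import Defs.
From Stdlib Require Import ZArith List Reals Arith Lia Lra Classical.
Import ListNotations.

Definition popp (p : point) : point := (- fst p, - snd p)%Z.

Ltac psolve := unfold padd, psub, popp, dotZ, cardinal in *;
  repeat match goal with p : point |- _ => destruct p | p : (Z*Z)%type |- _ => destruct p end;
  simpl in *;
  repeat match goal with H : (_,_) = (_,_) |- _ => injection H; clear H; intros end;
  try (f_equal; lia); try lia.

Lemma padd_inj_r (p q c : point) : padd p c = padd q c -> p = q.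
Proof. intros; psolve. Qed.
Lemma psub_padd (p e : point) : psub (padd p e) p = e.
Proof. psolve. Qed.
Lemma psub_padd_opp (p e : point) : psub p (padd p e) = popp e.
Proof. psolve. Qed.
Lemma psub_swap (p q : point) : psub p q = popp (psub q p).
Proof. psolve. Qed.
Lemma baseA_alg (p q c : point) : padd p (psub (padd q c) (padd p c)) = q.
Proof. psolve. Qed.
Lemma card_opp (p d : point) : cardinal d -> padd p d = padd p (popp d) -> False.
Proof. intros H1 H2. psolve; destruct H1 as [Hc|[Hc|[Hc|Hc]]];
  injection Hc; intros; subst; lia. Qed.
Lemma dot_self (e : point) : dotZ e e = 0%Z -> e = (0,0)%Z.
Proof. intros; psolve; f_equal; nia. Qed.
Lemma padd_zero (p : point) : padd p (0,0)%Z = p.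
Proof. psolve. Qed.
Lemma padd_opp_back (p p' d : point) : p' = padd p (popp d) -> p = padd p' d.
Proof. intros; subst; psolve. Qed.

Lemma nd_snd (l : list (nat*nat)) a a' b : NoDup (map snd l) -> In (a,b) l -> In (a',b) l -> a = a'.
Proof.
  induction l as [|x l IH]; simpl; intros Hnd H1 H2; [contradiction|].
  inversion Hnd as [|y l' Hni Hnd']; subst.
  destruct H1 as [H1|H1], H2 as [H2|H2]; subst.
  - injection H2; auto.
  - exfalso; apply Hni; simpl. change b with (snd (a',b)); apply in_map; auto.
  - exfalso; apply Hni; simpl. change b with (snd (a,b)); apply in_map; auto.
  - eauto.
Qed.

Section StepLemmas.
End StepLemmas.

Lemma step_node_old u0 S S' d ops z : step u0 S S' d ops -> node S z -> node S' z.
Proof. intros (_&_&_&_&Hn&_) H. apply Hn; auto. Qed.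

Lemma step_new u0 S S' d ops u u' : step u0 S S' d ops -> In (u,u') ops -> node S u /\ ~ node S u'.
Proof. intros (_&_&_&Ho&_) H. apply Ho; auto. Qed.

Lemma step_new_node u0 S S' d ops u u' : step u0 S S' d ops -> In (u,u') ops -> node S' u'.
Proof. intros (_&_&_&_&Hn&_) H. apply Hn; eauto. Qed.

Lemma step_edge_nodes u0 S S' d ops a b : step u0 S S' d ops ->
  (forall x y, edge S x y -> node S x /\ node S y) ->
  edge S' a b -> node S' a /\ node S' b.
Proof.
  intros Hs HS H. pose proof Hs as (_&_&_&Ho&Hn&He&_).
  apply He in H. destruct H as [[Hk _]|[(u&u'&Hin&[[-> ->]|[-> ->]])|(u&u'&v&Hin&[Hk _]&[[-> ->]|[-> ->]])]].
  - apply HS in Hk as [? ?]; split; apply Hn; auto.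
  - split; apply Hn; [left; apply (Ho _ _ Hin)|right; eauto].
  - split; apply Hn; [right; eauto|left; apply (Ho _ _ Hin)].
  - split; apply Hn; [right; eauto|left; apply (HS _ _ Hk)].
  - split; apply Hn; [left; apply (HS _ _ Hk)|right; eauto].
Qed.

Lemma traj1 (p q : point) : traj p q 1 = (IZR (fst q), IZR (snd q)).
Proof. unfold traj. f_equal; ring. Qed.

Lemma step_inj u0 S S' d ops a b : step u0 S S' d ops ->
  node S' a -> node S' b -> loc S' a = loc S' b -> a = b.
Proof.
  intros Hs Ha Hb Hl. pose proof Hs as (_&_&_&_&Hn&_&_&_&_&_&Hc).
  destruct (Nat.eq_dec a b) as [|Hne]; auto. exfalso.
  assert (Hsp : forall z, node S' z -> exists p, start_pos S ops z p).
  { intros z Hz. apply Hn in Hz as [Hz|(u&Hu)].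
    - exists (loc S z); left; auto.
    - exists (loc S u); right; eauto. }
  destruct (Hsp a Ha) as [pa Hpa], (Hsp b Hb) as [pb Hpb].
  apply (Hc a b pa pb Hne Ha Hb Hpa Hpb 1%R); [lra|].
  rewrite !traj1, Hl; reflexivity.
Qed.

Lemma step_edge_old_old u0 S S' d ops a b : step u0 S S' d ops ->
  node S a -> node S b -> edge S' a b -> edge S a b.
Proof.
  intros Hs Ha Hb H. pose proof Hs as (_&_&_&Ho&Hn&He&_).
  apply He in H. destruct H as [[Hk _]|[(u&u'&Hin&[[-> ->]|[-> ->]])|(u&u'&v&Hin&[Hk _]&[[-> ->]|[-> ->]])]];
  auto; exfalso; apply (Ho _ _ Hin); auto.
Qed.

Lemma step_edge_new u0 S S' d ops u n x : step u0 S S' d ops ->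
  (forall x y, edge S x y -> node S x /\ node S y) ->
  In (u,n) ops -> (edge S' n x \/ edge S' x n) -> x = u \/ subdiv S d u x.
Proof.
  intros Hs HS Hin H. pose proof Hs as (_&_&Hnd&Ho&Hn&He&_).
  assert (Hnn : ~ node S n) by (apply (Ho _ _ Hin)).
  destruct H as [H|H]; apply He in H;
  destruct H as [[Hk _]|[(u1&u1'&Hin1&[[E1 E2]|[E1 E2]])|(u1&u1'&v&Hin1&Hsd&[[E1 E2]|[E1 E2]])]]; subst.
  all: try (exfalso; apply Hnn; apply (HS _ _ Hk)).
  all: try (exfalso; apply Hnn; apply (Ho _ _ Hin1)).
  all: try (exfalso; apply Hnn; destruct Hsd as [Hk _]; apply (HS _ _ Hk)).
  all: match goal with
       | H1 : In (?a, ?b) ?l, H2 : In (?a', ?b) ?l |- _ =>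
           assert (a = a') by (apply (nd_snd l a a' b Hnd H1 H2)); subst; auto
       end.
Qed.

Lemma step_edge_cases u0 S S' d ops a b : step u0 S S' d ops -> edge S a b ->
  (exists a', In (a,a') ops /\ subdiv S d a b) \/
  (exists b', In (b,b') ops /\ subdiv S d b a) \/ kept_edge S d ops a b.
Proof.
  intros Hs H. destruct (classic (exists a', In (a,a') ops /\ subdiv S d a b)); auto.
  destruct (classic (exists b', In (b,b') ops /\ subdiv S d b a)); auto.
  right; right; split; auto.
Qed.

Definition idx (Sh : nat -> config) (T : nat) (P : list point) (c : point) (k z : nat) : Prop :=
  k < length P /\ loc (Sh T) z = padd (pt P k) c.
Definition seg (P : list point) (k1 k2 : nat) (e : point) : Prop :=
  forall k, k1 <= k < k2 -> pt P (k+1) = padd (pt P k) e.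
Definition InvA Sh T P c s : Prop := forall a b ka kb, edge (Sh s) a b ->
  idx Sh T P c ka a -> idx Sh T P c kb b ->
  (ka < kb /\ seg P ka kb (psub (loc (Sh s) b) (loc (Sh s) a))) \/
  (kb < ka /\ seg P kb ka (psub (loc (Sh s) a) (loc (Sh s) b))).
Definition InvB Sh T P c s : Prop := forall a b ka kb, node (Sh s) a -> node (Sh s) b ->
  idx Sh T P c ka a -> idx Sh T P c kb b -> ka < kb ->
  (forall w k, node (Sh s) w -> idx Sh T P c k w -> ka < k -> k < kb -> False) ->
  edge (Sh s) a b \/ edge (Sh s) b a.
Definition ctx P u0 T Sh D O c : Prop :=
  path_shape P /\ growth_process u0 T Sh D O /\ realizes (Sh T) P c.

Lemma g_step P u0 T Sh D O c s : ctx P u0 T Sh D O c -> s < T ->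
  step u0 (Sh s) (Sh (S s)) (D s) (O s).
Proof. intros (_&[_ H]&_) Hs; auto. Qed.

Lemma persist P u0 T Sh D O c s s' z : ctx P u0 T Sh D O c -> s <= s' -> s' <= T ->
  node (Sh s) z -> node (Sh s') z.
Proof.
  intros Hc. induction s'; intros H1 H2 Hz.
  - replace s with 0 in * by lia; auto.
  - destruct (Nat.eq_dec s (S s')) as [->|]; auto.
    eapply step_node_old; [apply (g_step P u0 T Sh D O c); auto; lia|].
    apply IHs'; auto; lia.
Qed.

Lemma edge_nodes P u0 T Sh D O c s : ctx P u0 T Sh D O c -> s <= T ->
  forall x y, edge (Sh s) x y -> node (Sh s) x /\ node (Sh s) y.
Proof.
  intros Hc. induction s; intros Hs x y H.
  - destruct Hc as (_&[[_ He] _]&_). exfalso; eapply He; eauto.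
  - eapply step_edge_nodes; [apply (g_step P u0 T Sh D O c); auto; lia| |eauto].
    apply IHs; lia.
Qed.

Lemma inj P u0 T Sh D O c s a b : ctx P u0 T Sh D O c -> s <= T ->
  node (Sh s) a -> node (Sh s) b -> loc (Sh s) a = loc (Sh s) b -> a = b.
Proof.
  intros Hc Hs. destruct s as [|s]; intros Ha Hb Hl.
  - destruct Hc as (_&[[Hn _] _]&_). apply Hn in Ha; apply Hn in Hb; subst; auto.
  - eapply step_inj; eauto. apply (g_step P u0 T Sh D O c); auto; lia.
Qed.

Lemma node_idx P u0 T Sh D O c s z : ctx P u0 T Sh D O c -> s <= T ->
  node (Sh s) z -> exists k, idx Sh T P c k z.
Proof.
  intros Hc Hs Hz. assert (HT : node (Sh T) z) by (eapply persist; eauto).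
  destruct Hc as (_&_&(Hr&_)). destruct (Hr z HT) as (j&Hj&Hl). exists j; split; auto.
Qed.

Lemma pt_inj P k k' : NoDup P -> k < length P -> k' < length P -> pt P k = pt P k' -> k = k'.
Proof. intros Hnd. apply (proj1 (NoDup_nth P (0,0)%Z) Hnd). Qed.

Lemma idx_k P u0 T Sh D O c k k' z : ctx P u0 T Sh D O c ->
  idx Sh T P c k z -> idx Sh T P c k' z -> k = k'.
Proof.
  intros ((_&Hnd&_)&_&_) [H1 E1] [H2 E2]. rewrite E1 in E2.
  apply padd_inj_r in E2. eapply pt_inj; eauto.
Qed.

Lemma idx_z P u0 T Sh D O c k z z' : ctx P u0 T Sh D O c ->
  node (Sh T) z -> node (Sh T) z' -> idx Sh T P c k z -> idx Sh T P c k z' -> z = z'.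
Proof.
  intros (_&_&(_&_&Hi&_)) H1 H2 [_ E1] [_ E2]. apply Hi; auto. congruence.
Qed.

Lemma seg_app P k1 k2 k3 e : seg P k1 k2 e -> seg P k2 k3 e -> seg P k1 k3 e.
Proof. intros H1 H2 k Hk. destruct (Nat.lt_ge_cases k k2); [apply H1|apply H2]; lia. Qed.

Lemma invA_T P u0 T Sh D O c : ctx P u0 T Sh D O c -> InvA Sh T P c T.
Proof.
  intros Hc a b ka kb He Ia Ib.
  destruct (edge_nodes P u0 T Sh D O c T ltac:(auto) ltac:(lia) a b He) as [Na Nb].
  pose proof Hc as ((_&Hnd&_)&_&(_&_&_&Hr)).
  apply (Hr a b Na Nb) in He as (j&Hj&[[E1 E2]|[E1 E2]]).
  - assert (ka = j). { destruct Ia as [? Ea]. rewrite Ea in E1. apply padd_inj_r in E1.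
      eapply pt_inj; eauto; lia. }
    assert (kb = j+1). { destruct Ib as [? Eb]. rewrite Eb in E2. apply padd_inj_r in E2.
      eapply pt_inj; eauto; lia. }
    subst. left; split; [lia|]. intros k Hk. replace k with j by lia.
    rewrite E1, E2. symmetry; apply baseA_alg.
  - assert (kb = j). { destruct Ib as [? Eb]. rewrite Eb in E1. apply padd_inj_r in E1.
      eapply pt_inj; eauto; lia. }
    assert (ka = j+1). { destruct Ia as [? Ea]. rewrite Ea in E2. apply padd_inj_r in E2.
      eapply pt_inj; eauto; lia. }
    subst. right; split; [lia|]. intros k Hk. replace k with j by lia.
    rewrite E1, E2. symmetry; apply baseA_alg.
Qed.

Lemma invB_T P u0 T Sh D O c : ctx P u0 T Sh D O c -> InvB Sh T P c T.
Proof.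
  intros Hc a b ka kb Na Nb Ia Ib Hlt Hgap.
  pose proof Hc as ((_&Hnd&_)&_&(_&Hex&_&Hr)).
  destruct (Nat.eq_dec kb (ka+1)) as [->|Hne].
  - left. apply (Hr a b Na Nb). exists ka; split; [apply Ib|]. left; split; [apply Ia|apply Ib].
  - exfalso. destruct Ib as [Hkb _].
    destruct (Hex (ka+1) ltac:(lia)) as (w&Nw&Lw).
    apply (Hgap w (ka+1) Nw); [split; auto; lia|lia|lia].
Qed.

Lemma min_exists (Q : nat -> Prop) lo : forall n, (exists j, lo <= j <= n /\ Q j) ->
  exists m, Q m /\ lo <= m <= n /\ forall k, lo <= k < m -> ~ Q k.
Proof.
  induction n; intros (j&Hj&Qj).
  - exists j; split; auto; split; [lia|]. intros; lia.
  - destruct (classic (exists j, lo <= j <= n /\ Q j)) as [Hy|Hn].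
    + destruct (IHn Hy) as (m&?&?&?); exists m; repeat split; auto; lia.
    + assert (j = S n). { destruct (Nat.eq_dec j (S n)); auto. exfalso; apply Hn; exists j; split; auto; lia. }
      subst. exists (S n); repeat split; auto; try lia. intros k Hk Qk; apply Hn; exists k; split; auto; lia.
Qed.

Lemma max_exists (Q : nat -> Prop) n : forall b, Q n -> n <= b ->
  exists m, Q m /\ n <= m <= b /\ forall k, m < k <= b -> ~ Q k.
Proof.
  induction b; intros Qn Hb.
  - exists n; repeat split; auto; lia.
  - destruct (classic (Q (S b))) as [Hy|Hn].
    + exists (S b); repeat split; auto; lia.
    + destruct (Nat.eq_dec n (S b)) as [->|Hne]; [contradiction|].
      destruct (IHb Qn ltac:(lia)) as (m&?&?&Hm). exists m; repeat split; auto; try lia.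
      intros k Hk. destruct (Nat.eq_dec k (S b)) as [->|]; auto. apply Hm; lia.
Qed.

Lemma cardinal_nz (d : point) : cardinal d -> padd (0,0)%Z d = padd (0,0)%Z (popp d) -> False.
Proof. intros; eapply card_opp; eauto. Qed.

Lemma invA_sub P u0 T Sh D O c s a a' b ka kb : ctx P u0 T Sh D O c -> s < T ->
  InvA Sh T P c (S s) -> In (a,a') (O s) -> subdiv (Sh s) (D s) a b ->
  idx Sh T P c ka a -> idx Sh T P c kb b ->
  (ka < kb /\ seg P ka kb (psub (loc (Sh s) b) (loc (Sh s) a))) \/
  (kb < ka /\ seg P kb ka (psub (loc (Sh s) a) (loc (Sh s) b))).
Proof.
  intros Hc Hs HA Hin Hsd Ia Ib.
  pose proof (g_step P u0 T Sh D O c s Hc Hs) as Hst.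
  pose proof Hst as (Hcard&_&_&_&_&He&_&_&Hnew&Hsub&_).
  set (d := D s) in *.
  assert (Na' : node (Sh (S s)) a') by (eapply step_new_node; eauto).
  destruct (node_idx P u0 T Sh D O c (S s) a' Hc ltac:(lia) Na') as [ka' Ia'].
  assert (E1 : edge (Sh (S s)) a a') by (apply He; right; left; exists a, a'; auto).
  assert (E2 : edge (Sh (S s)) a' b) by (apply He; right; right; exists a, a', b; auto).
  assert (L1 : loc (Sh (S s)) a' = padd (loc (Sh (S s)) a) d) by (apply Hnew; auto).
  assert (L2 : loc (Sh (S s)) b = padd (loc (Sh (S s)) a') d) by (eapply Hsub; eauto).
  destruct Hsd as [_ L0].
  rewrite L0, psub_padd, psub_padd_opp.
  destruct (HA a a' ka ka' E1 Ia Ia') as [[H1 S1]|[H1 S1]];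
  destruct (HA a' b ka' kb E2 Ia' Ib) as [[H2 S2]|[H2 S2]];
  rewrite ?L1, ?L2, ?psub_padd, ?psub_padd_opp in S1;
  rewrite ?L2, ?psub_padd, ?psub_padd_opp in S2.
  - left; split; [lia|]. eapply seg_app; eauto.
  - exfalso. assert (X1 := S1 (ka'-1) ltac:(lia)). assert (X2 := S2 (ka'-1) ltac:(lia)).
    replace (ka'-1+1) with ka' in * by lia. rewrite X1 in X2. eapply card_opp; eauto.
  - exfalso. assert (X1 := S1 ka' ltac:(lia)). assert (X2 := S2 ka' ltac:(lia)).
    rewrite X1 in X2. eapply card_opp; eauto.
  - right; split; [lia|]. eapply seg_app; eauto.
Qed.

Lemma invA_step P u0 T Sh D O c s : ctx P u0 T Sh D O c -> s < T ->
  InvA Sh T P c (S s) -> InvA Sh T P c s.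
Proof.
  intros Hc Hs HA a b ka kb He Ia Ib.
  pose proof (g_step P u0 T Sh D O c s Hc Hs) as Hst.
  destruct (step_edge_cases _ _ _ _ _ a b Hst He) as [(a'&Hin&Hsd)|[(b'&Hin&Hsd)|Hk]].
  - eapply invA_sub; eauto.
  - destruct (invA_sub P u0 T Sh D O c s b b' a kb ka Hc Hs HA Hin Hsd Ib Ia); tauto.
  - pose proof Hst as (_&_&_&_&_&Hed&_&Hkp&_).
    assert (E : edge (Sh (S s)) a b) by (apply Hed; left; auto).
    pose proof (Hkp a b Hk) as K.
    rewrite (psub_swap (loc (Sh s) a)), <- K, <- psub_swap.
    apply HA; auto.
Qed.

Lemma invB_step P u0 T Sh D O c s : ctx P u0 T Sh D O c -> s < T ->
  InvB Sh T P c (S s) -> InvB Sh T P c s.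
Proof.
  intros Hc Hs HB a b ka kb Na Nb Ia Ib Hlt Hgap.
  pose proof (g_step P u0 T Sh D O c s Hc Hs) as Hst.
  pose proof Hst as (_&_&_&_&Hn&_).
  assert (HS := edge_nodes P u0 T Sh D O c s Hc ltac:(lia)).
  assert (Per : forall z, node (Sh s) z -> node (Sh (S s)) z) by (intros; eapply step_node_old; eauto).
  assert (PerT : forall s' z, s' <= T -> node (Sh s') z -> node (Sh T) z)
    by (intros; eapply persist; eauto).
  set (Q := fun k => exists w, node (Sh (S s)) w /\ idx Sh T P c k w).
  destruct (min_exists Q (ka+1) kb ltac:(exists kb; split; [lia|]; exists b; auto))
    as (k1&(n1&N1&I1)&Hk1&Hm1).
  assert (E1 : edge (Sh (S s)) a n1 \/ edge (Sh (S s)) n1 a).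
  { apply (HB a n1 ka k1); auto; try lia. intros w k Nw Iw H1 H2. apply (Hm1 k); [lia|]. exists w; auto. }
  destruct (classic (node (Sh s) n1)) as [Old1|New1].
  - assert (k1 = kb). { destruct (Nat.eq_dec k1 kb); auto. exfalso; apply (Hgap n1 k1); auto; lia. }
    subst k1. assert (n1 = b) by (eapply idx_z; eauto; eapply PerT; eauto; lia). subst n1.
    destruct E1; [left|right]; eapply step_edge_old_old; eauto.
  - destruct (proj1 (Hn n1) N1) as [|(u&Hu)]; [contradiction|].
    assert (k1 <> kb). { intros ->. assert (n1 = b) by (eapply idx_z; eauto; eapply PerT; eauto; lia). subst; contradiction. }
    destruct (min_exists Q (k1+1) kb ltac:(exists kb; split; [lia|]; exists b; auto))
      as (k2&(n2&N2&I2)&Hk2&Hm2).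
    assert (E2 : edge (Sh (S s)) n1 n2 \/ edge (Sh (S s)) n2 n1).
    { apply (HB n1 n2 k1 k2); auto; try lia. intros w k Nw Iw H1 H2. apply (Hm2 k); [lia|]. exists w; auto. }
    assert (Old2 : node (Sh s) n2).
    { destruct (step_edge_new _ _ _ _ _ u n1 n2 Hst HS Hu E2) as [->|[Hk _]].
      - apply (step_new _ _ _ _ _ _ _ Hst Hu).
      - apply (HS _ _ Hk). }
    assert (k2 = kb). { destruct (Nat.eq_dec k2 kb); auto. exfalso; apply (Hgap n2 k2); auto; lia. }
    subst k2. assert (n2 = b) by (eapply idx_z; eauto; eapply PerT; eauto; lia). subst n2.
    assert (Ea := step_edge_new _ _ _ _ _ u n1 a Hst HS Hu ltac:(tauto)).
    assert (Eb := step_edge_new _ _ _ _ _ u n1 b Hst HS Hu E2).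
    destruct Ea as [->|[Ha La]], Eb as [->|[Hb Lb]].
    + assert (ka = kb) by (eapply idx_k; eauto); lia.
    + left; auto.
    + right; auto.
    + exfalso. assert (a = b) by (eapply (inj P u0 T Sh D O c s); eauto; [lia|congruence]). subst. assert (ka = kb) by (eapply idx_k; eauto); lia.
Qed.

Lemma inv_all P u0 T Sh D O c : ctx P u0 T Sh D O c ->
  forall s, s <= T -> InvA Sh T P c s /\ InvB Sh T P c s.
Proof.
  intros Hc. assert (forall n s, s + n = T -> InvA Sh T P c s /\ InvB Sh T P c s).
  { induction n; intros s Hs.
    - replace s with T by lia. split; [eapply invA_T|eapply invB_T]; eauto.
    - destruct (IHn (S s) ltac:(lia)). split; [eapply invA_step|eapply invB_step]; eauto; lia. }
  intros s Hs. apply (H (T - s)); lia.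
Qed.

Lemma invA_norm P u0 T Sh D O c s a b ka kb : ctx P u0 T Sh D O c -> s <= T ->
  (edge (Sh s) a b \/ edge (Sh s) b a) -> idx Sh T P c ka a -> idx Sh T P c kb b -> ka < kb ->
  seg P ka kb (psub (loc (Sh s) b) (loc (Sh s) a)).
Proof.
  intros Hc Hs [E|E] Ia Ib Hlt; destruct (inv_all P u0 T Sh D O c Hc s Hs) as [HA _].
  - destruct (HA a b ka kb E Ia Ib) as [[_ X]|[? _]]; auto; lia.
  - destruct (HA b a kb ka E Ib Ia) as [[? _]|[_ X]]; auto; lia.
Qed.

Lemma straight_contra P k e : NoDup P -> 0 < k -> k + 1 < length P ->
  pt P k = padd (pt P (k-1)) e -> pt P (k+1) = padd (pt P k) e ->
  dotZ (psub (pt P k) (pt P (k-1))) (psub (pt P (k+1)) (pt P k)) = 0%Z -> False.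
Proof.
  intros Hnd H0 Hl E1 E2 Hd. rewrite E2 in Hd at 1. rewrite E1 in Hd at 1.
  rewrite !psub_padd in Hd. apply dot_self in Hd. subst e. rewrite padd_zero in E2.
  assert (k + 1 = k) by (eapply pt_inj; eauto; lia). lia.
Qed.

Lemma seg_straight P k1 k2 k e : NoDup P -> k1 < k -> k < k2 -> k2 < length P ->
  seg P k1 k2 e ->
  dotZ (psub (pt P k) (pt P (k-1))) (psub (pt P (k+1)) (pt P k)) = 0%Z -> False.
Proof.
  intros Hnd H1 H2 H3 Hs Hd. eapply (straight_contra P k e); eauto; try lia.
  - assert (X := Hs (k-1) ltac:(lia)). replace (k-1+1) with k in X by lia. auto.
  - apply Hs; lia.
Qed.

Lemma key P u0 T Sh D O c s0 ya yb ka kb w k : ctx P u0 T Sh D O c -> s0 < T ->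
  node (Sh (S s0)) ya -> idx Sh T P c ka ya -> node (Sh (S s0)) yb -> idx Sh T P c kb yb ->
  ka < k -> k < kb -> node (Sh T) w -> idx Sh T P c k w ->
  dotZ (psub (pt P k) (pt P (k-1))) (psub (pt P (k+1)) (pt P k)) = 0%Z ->
  node (Sh s0) w.
Proof.
  intros Hc Hs Na Ia Nb Ib H1 H2 Nw Iw Hd.
  pose proof Hc as ((_&Hnd&_)&_&_).
  assert (Hkl : kb < length P) by apply Ib.
  set (s := S s0).
  pose proof (g_step P u0 T Sh D O c s0 Hc Hs) as Hst.
  pose proof Hst as (_&_&_&_&Hn&_&_&_&Hnew&Hsub&_).
  assert (HS := edge_nodes P u0 T Sh D O c s0 Hc ltac:(lia)).
  destruct (inv_all P u0 T Sh D O c Hc s ltac:(unfold s; lia)) as [_ HB].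
  set (Q := fun m => exists y, node (Sh s) y /\ idx Sh T P c m y).
  destruct (max_exists Q ka (k-1) ltac:(exists ya; auto) ltac:(lia)) as (k1&(y1&N1&I1)&Hk1&Hm1).
  destruct (min_exists Q (k+1) kb ltac:(exists kb; split; [lia|]; exists yb; auto))
    as (k2&(y2&N2&I2)&Hk2&Hm2).
  assert (Hk2l : k2 < length P) by apply I2.
  destruct (classic (node (Sh s) w)) as [Ws|Wn].
  - assert (E1 : edge (Sh s) y1 w \/ edge (Sh s) w y1).
    { apply (HB y1 w k1 k); auto; try lia. intros x m Nx Ix X1 X2. apply (Hm1 m); [lia|]. exists x; auto. }
    assert (E2 : edge (Sh s) w y2 \/ edge (Sh s) y2 w).
    { apply (HB w y2 k k2); auto; try lia. intros x m Nx Ix X1 X2. apply (Hm2 m); [lia|]. exists x; auto. }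
    destruct (classic (node (Sh s0) w)) as [|Wo]; auto. exfalso.
    destruct (proj1 (Hn w) Ws) as [|(u&Hu)]; [contradiction|].
    assert (S1 := invA_norm P u0 T Sh D O c s y1 w k1 k Hc ltac:(unfold s; lia) E1 I1 Iw ltac:(lia)).
    assert (S2 := invA_norm P u0 T Sh D O c s w y2 k k2 Hc ltac:(unfold s; lia) E2 Iw I2 ltac:(lia)).
    assert (Lw : loc (Sh s) w = padd (loc (Sh s) u) (D s0)) by (apply Hnew; auto).
    destruct (step_edge_new _ _ _ _ _ u w y1 Hst HS Hu ltac:(tauto)) as [->|Sd1];
    destruct (step_edge_new _ _ _ _ _ u w y2 Hst HS Hu ltac:(tauto)) as [->|Sd2].
    + assert (k1 = k2) by (eapply idx_k; eauto). lia.
    + assert (L2 : loc (Sh s) y2 = padd (loc (Sh s) w) (D s0)) by (eapply Hsub; eauto).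
      rewrite Lw, psub_padd in S1. rewrite L2, psub_padd in S2.
      eapply (seg_straight P k1 k2 k); eauto; try lia. eapply seg_app; eauto.
    + assert (L1 : loc (Sh s) y1 = padd (loc (Sh s) w) (D s0)) by (eapply Hsub; eauto).
      rewrite L1, psub_padd_opp in S1. rewrite Lw, psub_padd_opp in S2.
      eapply (seg_straight P k1 k2 k); eauto; try lia. eapply seg_app; eauto.
    + destruct Sd1 as [Ed1 L1], Sd2 as [Ed2 L2].
      assert (y1 = y2). { eapply (inj P u0 T Sh D O c s0); eauto; [lia|apply (HS _ _ Ed1)|apply (HS _ _ Ed2)|congruence]. }
      subst. assert (k1 = k2) by (eapply idx_k; eauto). lia.
  - exfalso.
    assert (E : edge (Sh s) y1 y2 \/ edge (Sh s) y2 y1).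
    { apply (HB y1 y2 k1 k2); auto; try lia. intros x m Nx Ix X1 X2.
      destruct (Nat.lt_total m k) as [Hm|[Hm|Hm]].
      - apply (Hm1 m); [lia|]. exists x; auto.
      - subst m. apply Wn. assert (x = w); [|subst; auto].
        eapply idx_z; eauto. eapply persist; eauto; unfold s; lia.
      - apply (Hm2 m); [lia|]. exists x; auto. }
    assert (S12 := invA_norm P u0 T Sh D O c s y1 y2 k1 k2 Hc ltac:(unfold s; lia) E I1 I2 ltac:(lia)).
    eapply (seg_straight P k1 k2 k); eauto; lia.
Qed.

Definition Sorted_nth (l : list nat) : Prop :=
  forall m1 m2, m1 < m2 < length l -> nth m1 l 0 < nth m2 l 0.

Lemma sorted_filter_seq (f : nat -> bool) : forall n a,
  (forall x, In x (filter f (seq a n)) -> a <= x) /\ Sorted_nth (filter f (seq a n)).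
Proof.
  induction n; intros a; simpl.
  - split; [intros; contradiction|intros m1 m2 H; simpl in H; lia].
  - destruct (IHn (S a)) as [Hge Hs]. destruct (f a).
    + split.
      * intros x [<-|Hx]; [lia|apply Hge in Hx; lia].
      * intros m1 m2 H. simpl in H. destruct m2 as [|m2]; [lia|]. destruct m1 as [|m1]; simpl.
        -- assert (In (nth m2 (filter f (seq (S a) n)) 0) (filter f (seq (S a) n))) by (apply nth_In; lia).
           apply Hge in H0; lia.
        -- apply Hs; lia.
    + split; auto. intros x Hx; apply Hge in Hx; lia.
Qed.

Lemma tp_props P m : m < length (turning_points P) ->
  tp P m < length P /\ turningb P (tp P m) = true.
Proof.
  intros H. unfold tp. assert (X := nth_In _ 0 H). unfold turning_points in *.
  apply filter_In in X as [X1 X2]. apply in_seq in X1. split; [lia|auto].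
Qed.

Lemma tp_mono P m1 m2 : m1 < m2 < length (turning_points P) -> tp P m1 < tp P m2.
Proof. intros H. apply (proj2 (sorted_filter_seq (turningb P) (length P) 0)); auto. Qed.

Lemma turning_dot P k : turningb P k = true -> 0 < k -> k + 1 < length P ->
  dotZ (psub (pt P k) (pt P (k-1))) (psub (pt P (k+1)) (pt P k)) = 0%Z.
Proof.
  intros H H1 H2. unfold turningb in H.
  destruct (Nat.eqb_spec k 0); [lia|]. destruct (Nat.eqb_spec k (length P - 1)); [lia|].
  simpl in H. apply Z.eqb_eq; auto.
Qed.

Lemma order_gen P u0 T Sh D O c ki k k' z z' s s' : ctx P u0 T Sh D O c ->
  idx Sh T P c ki u0 -> node (Sh T) z -> idx Sh T P c k z -> node (Sh T) z' -> idx Sh T P c k' z' ->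
  ((ki < k /\ k < k') \/ (k' < k /\ k < ki)) -> turningb P k = true ->
  first_time Sh z s -> first_time Sh z' s' -> s < s'.
Proof.
  intros Hc Iu Nz Iz Nz' Iz' Hord Ht [Fz Fz'] [Gz Gz'].
  assert (N0 : node (Sh 0) u0) by (destruct Hc as (_&[[Hn _] _]&_); apply Hn; auto).
  assert (Hs' : s' <= T). { destruct (Nat.le_gt_cases s' T); auto. exfalso; eapply Gz'; eauto. }
  destruct s' as [|s0].
  - exfalso. assert (z' = u0) by (destruct Hc as (_&[[Hn _] _]&_); apply Hn; auto). subst.
    assert (ki = k') by (eapply idx_k; eauto). destruct Hord; lia.
  - assert (Nu : node (Sh (S s0)) u0) by (apply (persist P u0 T Sh D O c 0 (S s0) u0 Hc); auto; lia).
    assert (Hkl : ki < length P /\ k' < length P) by (split; [apply Iu|apply Iz']).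
    assert (Hd := turning_dot P k Ht ltac:(lia) ltac:(lia)).
    assert (node (Sh s0) z).
    { destruct Hord as [[H1 H2]|[H1 H2]].
      - eapply (key P u0 T Sh D O c s0 u0 z' ki k' z k); eauto; lia.
      - eapply (key P u0 T Sh D O c s0 z' u0 k' ki z k); eauto; lia. }
    destruct (Nat.le_gt_cases s s0); [lia|]. exfalso; eapply Fz'; eauto.
Qed.

Lemma dir_gen P u0 T Sh D O c s x y j : ctx P u0 T Sh D O c -> s <= T ->
  edge (Sh s) x y -> idx Sh T P c j x ->
  nbr_dir P j (psub (loc (Sh s) y) (loc (Sh s) x)).
Proof.
  intros Hc Hs E Ix.
  destruct (edge_nodes P u0 T Sh D O c s Hc Hs x y E) as [Nx Ny].
  destruct (node_idx P u0 T Sh D O c s y Hc Hs Ny) as [ky Iy].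
  assert (Hky : ky < length P) by apply Iy.
  destruct (Nat.lt_total j ky) as [H|[H|H]].
  - right. split; [lia|]. apply (invA_norm P u0 T Sh D O c s x y j ky Hc Hs (or_introl E) Ix Iy H). lia.
  - subst. assert (x = y). { eapply idx_z; eauto; eapply persist; eauto. } subst.
    destruct (inv_all P u0 T Sh D O c Hc s Hs) as [HA _].
    destruct (HA y y ky ky E Iy Iy) as [[? _]|[? _]]; lia.
  - left. split; [lia|].
    assert (X := invA_norm P u0 T Sh D O c s y x ky j Hc Hs (or_intror E) Iy Ix H (j-1) ltac:(lia)).
    replace (j-1+1) with j in X by lia. rewrite psub_swap in X.
    apply padd_opp_back; auto.
Qed.

Theorem lemma3p3 (P : list point) (i : nat) (u0 T : nat)
  (Sh : nat -> config) (D : nat -> point) (O : nat -> list (nat * nat))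
  (c : point) :
  path_shape P ->
  i < length (turning_points P) ->
  growth_process u0 T Sh D O ->
  realizes (Sh T) P c ->
  loc (Sh T) u0 = padd (pt P (tp P i)) c ->
  (* tp_{i+1}, ..., tp_k are generated in this order *)
  (forall j z z' s s', i < j -> j + 1 < length (turning_points P) ->
     node (Sh T) z -> loc (Sh T) z = padd (pt P (tp P j)) c ->
     node (Sh T) z' -> loc (Sh T) z' = padd (pt P (tp P (j + 1))) c ->
     first_time Sh z s -> first_time Sh z' s' -> s < s') /\
  (* tp_{i-1}, ..., tp_1 are generated in this order *)
  (forall j z z' s s', j + 1 < i ->
     node (Sh T) z -> loc (Sh T) z = padd (pt P (tp P (j + 1))) c ->
     node (Sh T) z' -> loc (Sh T) z' = padd (pt P (tp P j)) c ->
     first_time Sh z s -> first_time Sh z' s' -> s < s') /\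
  (* directions are those prescribed by P *)
  (forall s x x' j, s < T -> In (x, x') (O s) ->
     (exists v, edge (Sh s) x v) ->
     j < length P -> loc (Sh T) x = padd (pt P j) c ->
     nbr_dir P j (D s) /\
     forall v, edge (Sh s) x v -> nbr_dir P j (psub (loc (Sh s) v) (loc (Sh s) x))).
Proof.
  intros HP Hi Hg Hr Hu0.
  assert (Hc : ctx P u0 T Sh D O c) by (split; [|split]; auto).
  assert (Iu : idx Sh T P c (tp P i) u0) by (split; auto; apply tp_props; auto).
  split; [|split].
  - intros j z z' s s' H1 H2 Nz Lz Nz' Lz' F F'.
    destruct (tp_props P j ltac:(lia)) as [Tj Hj].
    destruct (tp_props P (j+1) ltac:(lia)) as [Tj1 _].
    eapply (order_gen P u0 T Sh D O c (tp P i) (tp P j) (tp P (j+1)) z z'); eauto;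
      try (split; auto).
    left; split; apply tp_mono; lia.
  - intros j z z' s s' H1 Nz Lz Nz' Lz' F F'.
    destruct (tp_props P (j+1) ltac:(lia)) as [Tj1 Hj1].
    destruct (tp_props P j ltac:(lia)) as [Tj _].
    eapply (order_gen P u0 T Sh D O c (tp P i) (tp P (j+1)) (tp P j) z z'); eauto;
      try (split; auto).
    right; split; apply tp_mono; lia.
  - intros s x x' j Hs Hin _ Hj Lx.
    assert (Ix : idx Sh T P c j x) by (split; auto).
    split.
    + pose proof (g_step P u0 T Sh D O c s Hc Hs) as (_&_&_&_&_&He&_&_&Hnew&_).
      assert (E : edge (Sh (S s)) x x') by (apply He; right; left; exists x, x'; auto).
      assert (X := dir_gen P u0 T Sh D O c (S s) x x' j Hc ltac:(lia) E Ix).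
      rewrite (Hnew x x' Hin), psub_padd in X. auto.
    + intros v E. apply (dir_gen P u0 T Sh D O c s x v j Hc ltac:(lia) E Ix).
Qed.
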